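(* Let $(a,b,c)$ be a primitive Eisenstein triple, and let $m,n$ be positive coprime integers with $1\le m/n\le2$ and $3\nmid(m+n)$ such that either $(a,b,c)$ or $(b-a,b,c)$ equals $(m(2n-m),\ n(2m-n),\ m^2-mn+n^2)$. Let $\theta\in[\pi/3,\pi/2]$ satisfy $\cos\theta = |b-2a|/(2c)$, and define $$\Gamma_\theta = \begin{bmatrix}1&-\frac12\\0&\frac{\sqrt3}{2}\end{bmatrix}\begin{bmatrix} m & m-n\\ m-n & m\end{bmatrix}\mathbb{Z}^2 = \frac12\begin{bmatrix} m+n & m-2n\\ (m-n)\sqrt3 & m\sqrt3\end{bmatrix}\mathbb{Z}^2.$$ Then $\Gamma_\theta\in\mathrm{WR}(\Lambda_h)$, $C_h(\theta)$ is the set of all lattices in $\mathrm{WR}(\Lambda_h)$ similar to $\Gamma_\theta$, and $$|\Gamma_\theta| = c,\qquad \det\Gamma_\theta = b\frac{\sqrt3}{2},\qquad |\Lambda_h:\Gamma_\theta| = b.$$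
   Context: $\Lambda_h = \begin{bmatrix} 1 & -1/2 \\ 0 & \sqrt3/2\end{bmatrix}\mathbb{Z}^2$. For a full-rank lattice $\Gamma=A\mathbb{Z}^2\subset\mathbb{R}^2$, $\det\Gamma=|\det A|$, $|\Gamma|=\min\{\|y\|^2:y\in\Gamma\setminus\{0\}\}$, and for $\Gamma\subseteq\Lambda_h$, $|\Lambda_h:\Gamma|=\det\Gamma/\det\Lambda_h$. $\Gamma$ is well-rounded (WR) if it has a basis of vectors of squared norm $|\Gamma|$; such a basis can be chosen with angle in $[\pi/3,\pi/2]$ between its vectors, and this angle $\theta(\Gamma)$ is an invariant. $\mathrm{WR}(\Lambda_h)$ is the set of full-rank WR sublattices of $\Lambda_h$, $C_h(\theta)=\{\Omega\in\mathrm{WR}(\Lambda_h):\theta(\Omega)=\theta\}$. Lattices are similar if one is $\alpha A$ times the other for nonzero real $\alpha$ and $A\in O_2(\mathbb{R})$. An Eisenstein triple is $(a,b,c)\in\mathbb{Z}^3_{\ge0}\setminus\{0\}$ with $a^2-ab+b^2=c^2$; it is primitive if $a\le b$ and $\gcd(a,b,c)=1$. *)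

(* Defs.v *)
From Stdlib Require Import Reals ZArith ClassicalEpsilon.
Open Scope R_scope.

(* Points of R^2 and 2x2 real matrices (entries a11 a12 a21 a22). *)
Definition vec := (R * R)%type.
Definition mat := (R * R * R * R)%type.

Definition vadd (x y : vec) : vec := (fst x + fst y, snd x + snd y).
Definition vscal (t : R) (x : vec) : vec := (t * fst x, t * snd x).
Definition dot (x y : vec) : R := fst x * fst y + snd x * snd y.
Definition nrm2 (x : vec) : R := dot x x.
Definition det2 (v1 v2 : vec) : R := fst v1 * snd v2 - snd v1 * fst v2.

Definition mat_apply (A : mat) (x : vec) : vec :=
  match A with (a11, a12, a21, a22) =>
    (a11 * fst x + a12 * snd x, a21 * fst x + a22 * snd x) end.
Definition col1 (A : mat) : vec := match A with (a11, _, a21, _) => (a11, a21) end.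
Definition col2 (A : mat) : vec := match A with (_, a12, _, a22) => (a12, a22) end.
Definition matmul (A B : mat) : mat :=
  match A, B with (a11, a12, a21, a22), (b11, b12, b21, b22) =>
    (a11*b11 + a12*b21, a11*b12 + a12*b22, a21*b11 + a22*b21, a21*b12 + a22*b22) end.
Definition orthogonal (A : mat) : Prop :=
  match A with (a11, a12, a21, a22) =>
    a11*a11 + a21*a21 = 1 /\ a12*a12 + a22*a22 = 1 /\ a11*a12 + a21*a22 = 0 end.

Definition lattice := vec -> Prop.

Definition zspan (v1 v2 : vec) : lattice :=
  fun x => exists p q : Z, x = vadd (vscal (IZR p) v1) (vscal (IZR q) v2).

Definition mat_lat (A : mat) : lattice := zspan (col1 A) (col2 A).

Definition is_basis (G : lattice) (v1 v2 : vec) : Prop :=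
  det2 v1 v2 <> 0 /\ forall x, G x <-> zspan v1 v2 x.

Definition full_rank_lattice (G : lattice) : Prop := exists v1 v2, is_basis G v1 v2.

Definition sublattice (G L : lattice) : Prop := forall x, G x -> L x.

(* det G = |det A| for a basis matrix A (independent of the basis) *)
Definition lat_det (G : lattice) : R :=
  epsilon (inhabits 0) (fun d => exists v1 v2, is_basis G v1 v2 /\ d = Rabs (det2 v1 v2)).

(* |G| = min { ||y||^2 : y in G, y <> 0 } *)
Definition is_min_norm (G : lattice) (r : R) : Prop :=
  (exists y, G y /\ y <> (0, 0) /\ nrm2 y = r) /\
  (forall y, G y -> y <> (0, 0) -> r <= nrm2 y).
Definition lat_min (G : lattice) : R := epsilon (inhabits 0) (is_min_norm G).

Definition Mh : mat := (1, -(1/2), 0, sqrt 3 / 2).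
Definition Lambda_h : lattice := mat_lat Mh.

Definition lat_index (G : lattice) : R := lat_det G / lat_det Lambda_h.

Definition WR (G : lattice) : Prop :=
  full_rank_lattice G /\
  exists v1 v2, is_basis G v1 v2 /\ nrm2 v1 = lat_min G /\ nrm2 v2 = lat_min G.

Definition WR_h (G : lattice) : Prop := WR G /\ sublattice G Lambda_h.

Definition lat_angle (G : lattice) (t : R) : Prop :=
  PI / 3 <= t <= PI / 2 /\
  exists v1 v2, is_basis G v1 v2 /\ nrm2 v1 = lat_min G /\ nrm2 v2 = lat_min G /\
    cos t = dot v1 v2 / (sqrt (nrm2 v1) * sqrt (nrm2 v2)).

Definition C_h (t : R) (G : lattice) : Prop := WR_h G /\ lat_angle G t.

Definition similar (G H : lattice) : Prop :=
  exists (alpha : R) (A : mat), alpha <> 0 /\ orthogonal A /\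
    forall x, G x <-> exists y, H y /\ x = vscal alpha (mat_apply A y).

Definition eisenstein_triple (a b c : Z) : Prop :=
  (0 <= a)%Z /\ (0 <= b)%Z /\ (0 <= c)%Z /\ ~ (a = 0 /\ b = 0 /\ c = 0)%Z /\
  (a*a - a*b + b*b = c*c)%Z.
Definition primitive_eisenstein_triple (a b c : Z) : Prop :=
  eisenstein_triple a b c /\ (a <= b)%Z /\ Z.gcd (Z.gcd a b) c = 1%Z.

Definition Gamma_mn (m n : Z) : lattice :=
  mat_lat (matmul Mh (IZR m, IZR (m - n), IZR (m - n), IZR m)).

(* Main.v *)
Require Import Defs.
From Stdlib Require Import Reals ZArith Lra Lia Psatz ClassicalEpsilon.
Open Scope R_scope.

Lemma int_ineq (p q : Z) : (p <> 0 \/ q <> 0)%Z -> (1 <= p*p + q*q - Z.abs (p*q))%Z.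
Proof. intros H. destruct (Z.abs_spec (p*q)) as [[h1 h2]|[h1 h2]]; rewrite h2; nia. Qed.

Lemma min_norm_unique G r1 r2 : is_min_norm G r1 -> is_min_norm G r2 -> r1 = r2.
Proof.
  intros [[y1 [G1 [n1 e1]]] H1] [[y2 [G2 [n2 e2]]] H2].
  specialize (H1 y2 G2 n2). specialize (H2 y1 G1 n1). lra.
Qed.

Lemma lat_min_eq G r : is_min_norm G r -> lat_min G = r.
Proof.
  intro H. unfold lat_min.
  assert (E: exists r', is_min_norm G r') by eauto.
  pose proof (epsilon_spec (inhabits 0) (is_min_norm G) E) as S.
  eapply min_norm_unique; eauto.
Qed.

Lemma min_norm_ext G H r : (forall x, G x <-> H x) -> is_min_norm G r -> is_min_norm H r.
Proof.
  intros E [[y [Gy [ny ry]]] Hm]. split.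
  - exists y. repeat split; auto. apply E; auto.
  - intros z Hz nz. apply Hm; auto. apply E; auto.
Qed.

Lemma zspan_self1 v1 v2 : zspan v1 v2 v1.
Proof. exists 1%Z, 0%Z. destruct v1, v2; unfold vadd, vscal; simpl; f_equal; ring. Qed.
Lemma zspan_self2 v1 v2 : zspan v1 v2 v2.
Proof. exists 0%Z, 1%Z. destruct v1, v2; unfold vadd, vscal; simpl; f_equal; ring. Qed.

Lemma det_change v1 v2 w1 w2 p1 q1 p2 q2 :
  v1 = vadd (vscal p1 w1) (vscal q1 w2) -> v2 = vadd (vscal p2 w1) (vscal q2 w2) ->
  det2 v1 v2 = (p1*q2 - q1*p2) * det2 w1 w2.
Proof. intros -> ->. destruct w1, w2; unfold det2, vadd, vscal; simpl; ring. Qed.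

Lemma basis_det_unique G v1 v2 w1 w2 :
  is_basis G v1 v2 -> is_basis G w1 w2 -> Rabs (det2 v1 v2) = Rabs (det2 w1 w2).
Proof.
  intros [dv Hv] [dw Hw].
  assert (Gv1 : G v1) by (apply Hv; apply zspan_self1).
  assert (Gv2 : G v2) by (apply Hv; apply zspan_self2).
  assert (Gw1 : G w1) by (apply Hw; apply zspan_self1).
  assert (Gw2 : G w2) by (apply Hw; apply zspan_self2).
  destruct (proj1 (Hw v1) Gv1) as [p1 [q1 E1]].
  destruct (proj1 (Hw v2) Gv2) as [p2 [q2 E2]].
  destruct (proj1 (Hv w1) Gw1) as [p3 [q3 E3]].
  destruct (proj1 (Hv w2) Gw2) as [p4 [q4 E4]].
  pose proof (det_change _ _ _ _ _ _ _ _ E1 E2) as D1.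
  pose proof (det_change _ _ _ _ _ _ _ _ E3 E4) as D2.
  assert (HP : IZR (p1*q2 - q1*p2) * IZR (p3*q4 - q3*p4) = 1).
  { rewrite !minus_IZR, !mult_IZR.
    apply (Rmult_eq_reg_r (det2 v1 v2)); auto.
    rewrite Rmult_1_l. rewrite D1 at 2. rewrite D2. ring. }
  rewrite <- mult_IZR in HP. apply eq_IZR in HP.
  apply Z.eq_mul_1 in HP.
  rewrite D1, Rabs_mult.
  replace (IZR p1 * IZR q2 - IZR q1 * IZR p2) with (IZR (p1*q2 - q1*p2))
    by (rewrite minus_IZR, !mult_IZR; ring).
  destruct HP as [HP|HP]; rewrite HP; [rewrite Rabs_R1; ring | rewrite Ropp_Ropp_IZR, Rabs_Ropp, Rabs_R1; ring].
Qed.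

Lemma lat_det_basis G v1 v2 : is_basis G v1 v2 -> lat_det G = Rabs (det2 v1 v2).
Proof.
  intro B. unfold lat_det.
  assert (E: exists d, exists w1 w2, is_basis G w1 w2 /\ d = Rabs (det2 w1 w2)).
  { exists (Rabs (det2 v1 v2)), v1, v2; auto. }
  destruct (epsilon_spec (inhabits 0) _ E) as [w1 [w2 [Bw ->]]].
  eapply basis_det_unique; eauto.
Qed.

Lemma zspan_min (w1 w2 : vec) c : 0 < c -> nrm2 w1 = c -> nrm2 w2 = c ->
  Rabs (dot w1 w2) <= c/2 -> is_min_norm (zspan w1 w2) c.
Proof.
  intros cpos n1 n2 hd. split.
  - exists w1. split; [apply zspan_self1|split; [|exact n1]].
    intro E; rewrite E in n1; unfold nrm2, dot in n1; simpl in n1; lra.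
  - intros y [p [q ->]] ny.
    assert (pq : (p <> 0 \/ q <> 0)%Z).
    { destruct (Z.eq_dec p 0), (Z.eq_dec q 0); auto. subst; exfalso; apply ny.
      destruct w1, w2; unfold vadd, vscal; simpl; f_equal; ring. }
    pose proof (int_ineq p q pq) as I.
    apply IZR_le in I. rewrite minus_IZR, plus_IZR, !mult_IZR, abs_IZR, mult_IZR in I.
    assert (E: nrm2 (vadd (vscal (IZR p) w1) (vscal (IZR q) w2)) =
      IZR p * IZR p * nrm2 w1 + 2 * (IZR p * IZR q) * dot w1 w2 + IZR q * IZR q * nrm2 w2)
      by (destruct w1, w2; unfold nrm2, dot, vadd, vscal; simpl; ring).
    rewrite E, n1, n2. revert I hd.
    generalize (IZR p) (IZR q) (dot w1 w2). intros P Q d.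
    unfold Rabs. destruct (Rcase_abs (P*Q)); destruct (Rcase_abs d); intros; nra.
Qed.

Definition simf (al : R) (A : mat) (y : vec) : vec := vscal al (mat_apply A y).

Lemma simf_lin al A p q w1 w2 :
  simf al A (vadd (vscal p w1) (vscal q w2)) = vadd (vscal p (simf al A w1)) (vscal q (simf al A w2)).
Proof. destruct A as [[[a b] c] d]; destruct w1, w2; unfold simf, vadd, vscal, mat_apply; simpl; f_equal; ring. Qed.

Lemma simf_dot al A y z : orthogonal A -> dot (simf al A y) (simf al A z) = al*al * dot y z.
Proof.
  destruct A as [[[a11 a12] a21] a22]; destruct y as [y1 y2], z as [z1 z2];
  unfold orthogonal, simf, dot, vscal, mat_apply; simpl. intros [h1 [h2 h3]].
  replace ((al * (a11 * y1 + a12 * y2)) * (al * (a11 * z1 + a12 * z2)) +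
           (al * (a21 * y1 + a22 * y2)) * (al * (a21 * z1 + a22 * z2)))
   with (al*al*(y1*z1*(a11*a11+a21*a21) + (y1*z2+y2*z1)*(a11*a12+a21*a22) + y2*z2*(a12*a12+a22*a22)))
   by ring.
  rewrite h1, h2, h3. ring.
Qed.

Lemma simf_det al A y z : orthogonal A -> al <> 0 -> det2 y z <> 0 -> det2 (simf al A y) (simf al A z) <> 0.
Proof.
  destruct A as [[[a11 a12] a21] a22]; destruct y as [y1 y2], z as [z1 z2];
  unfold orthogonal, simf, det2, vscal, mat_apply; simpl. intros [h1 [h2 h3]] ha hd.
  assert (HD : (a11*a22 - a12*a21)*(a11*a22 - a12*a21) = 1).
  { replace ((a11*a22 - a12*a21)*(a11*a22 - a12*a21)) with
      ((a11*a11+a21*a21)*(a12*a12+a22*a22) - (a11*a12+a21*a22)*(a11*a12+a21*a22)) by ring.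
    rewrite h1, h2, h3. ring. }
  replace (al * (a11 * y1 + a12 * y2) * (al * (a21 * z1 + a22 * z2)) -
           al * (a21 * y1 + a22 * y2) * (al * (a11 * z1 + a12 * z2)))
    with (al*al*(a11*a22 - a12*a21)*(y1*z2 - y2*z1)) by ring.
  intro E. apply Rmult_integral in E. destruct E as [E|E]; [|auto].
  apply Rmult_integral in E. destruct E as [E|E]; [apply Rmult_integral in E; destruct E; auto|].
  rewrite E in HD. lra.
Qed.

Lemma simf_image G al A w1 w2 :
  (forall x, G x <-> exists y, zspan w1 w2 y /\ x = simf al A y) ->
  forall x, G x <-> zspan (simf al A w1) (simf al A w2) x.
Proof.
  intros H x. rewrite H. split.
  - intros [y [[p [q ->]] ->]]. exists p, q. apply simf_lin.
  - intros [p [q ->]]. exists (vadd (vscal (IZR p) w1) (vscal (IZR q) w2)). split.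
    + exists p, q; auto.
    + symmetry; apply simf_lin.
Qed.

Lemma sim_of_basis G H al A w1 w2 :
  (forall x, G x <-> zspan (simf al A w1) (simf al A w2) x) ->
  (forall x, H x <-> zspan w1 w2 x) ->
  forall x, G x <-> exists y, H y /\ x = vscal al (mat_apply A y).
Proof.
  intros HG HH x. rewrite HG. split.
  - intros [p [q ->]]. exists (vadd (vscal (IZR p) w1) (vscal (IZR q) w2)). split.
    + apply HH. exists p, q; auto.
    + symmetry; apply simf_lin.
  - intros [y [Hy ->]]. apply HH in Hy. destruct Hy as [p [q ->]].
    exists p, q. apply simf_lin.
Qed.

Lemma sim_exists (u1 u2 w1 w2 : vec) k : 0 < k -> det2 w1 w2 <> 0 ->
  nrm2 u1 = k * nrm2 w1 -> nrm2 u2 = k * nrm2 w2 -> dot u1 u2 = k * dot w1 w2 ->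
  exists al A, al <> 0 /\ orthogonal A /\ simf al A w1 = u1 /\ simf al A w2 = u2.
Proof.
  destruct u1 as [x1 y1], u2 as [x2 y2], w1 as [p1 q1], w2 as [p2 q2].
  unfold det2, nrm2, dot; simpl. intros kpos dn h1 h2 h3.
  assert (alk : sqrt k * sqrt k = k) by (apply sqrt_sqrt; lra).
  assert (alpos : 0 < sqrt k) by (apply sqrt_lt_R0; lra).
  revert alk alpos. generalize (sqrt k). intros al alk alpos.
  set (d := p1*q2 - q1*p2) in *.
  assert (E: forall a b e f, a/(d*al)*(b/(d*al)) + e/(d*al)*(f/(d*al)) = (a*b+e*f)/(d*d*(al*al)))
    by (intros; field; split; lra).
  exists al, ((x1*q2 - x2*q1)/(d*al), (x2*p1 - x1*p2)/(d*al), (y1*q2 - y2*q1)/(d*al), (y2*p1 - y1*p2)/(d*al)).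
  split; [lra|]. split; [unfold orthogonal; rewrite !E; split; [|split]|].
  - replace ((x1*q2 - x2*q1)*(x1*q2 - x2*q1) + (y1*q2 - y2*q1)*(y1*q2 - y2*q1)) with
      (q2*q2*(x1*x1+y1*y1) - 2*q1*q2*(x1*x2+y1*y2) + q1*q1*(x2*x2+y2*y2)) by ring.
    rewrite h1, h2, h3, alk. unfold d. field. split; [lra|fold d; auto].
  - replace ((x2*p1 - x1*p2)*(x2*p1 - x1*p2) + (y2*p1 - y1*p2)*(y2*p1 - y1*p2)) with
      (p2*p2*(x1*x1+y1*y1) - 2*p1*p2*(x1*x2+y1*y2) + p1*p1*(x2*x2+y2*y2)) by ring.
    rewrite h1, h2, h3, alk. unfold d. field. split; [lra|fold d; auto].
  - replace ((x1*q2 - x2*q1)*(x2*p1 - x1*p2) + (y1*q2 - y2*q1)*(y2*p1 - y1*p2)) with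
      (-(q2*p2)*(x1*x1+y1*y1) + (q2*p1+q1*p2)*(x1*x2+y1*y2) - q1*p1*(x2*x2+y2*y2)) by ring.
    rewrite h1, h2, h3, alk. unfold d. field. split; [lra|fold d; auto].
  - unfold simf, vscal, mat_apply; simpl. split; f_equal; unfold d in *; field; split; lra.
Qed.

Definition g1 m n := col1 (matmul Mh (IZR m, IZR (m - n), IZR (m - n), IZR m)).
Definition g2 m n := col2 (matmul Mh (IZR m, IZR (m - n), IZR (m - n), IZR m)).

Lemma Gamma_eq m n x : Gamma_mn m n x <-> zspan (g1 m n) (g2 m n) x.
Proof. reflexivity. Qed.

Lemma g1_eq m n : g1 m n = (IZR m - (IZR m - IZR n)/2, sqrt 3/2 * (IZR m - IZR n)).
Proof. unfold g1, col1, matmul, Mh. rewrite minus_IZR. f_equal; field. Qed.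
Lemma g2_eq m n : g2 m n = (IZR m - IZR n - IZR m/2, sqrt 3/2 * IZR m).
Proof. unfold g2, col2, matmul, Mh. rewrite minus_IZR. f_equal; field. Qed.

Lemma s3 : sqrt 3 * sqrt 3 = 3.
Proof. apply sqrt_sqrt; lra. Qed.

Lemma g_facts m n : let M := IZR m in let N := IZR n in
  nrm2 (g1 m n) = M*M - M*N + N*N /\ nrm2 (g2 m n) = M*M - M*N + N*N /\
  dot (g1 m n) (g2 m n) = (2*M*M - 2*M*N - N*N)/2 /\
  det2 (g1 m n) (g2 m n) = sqrt 3 / 2 * (N*(2*M - N)).
Proof.
  intros M N. rewrite g1_eq, g2_eq. fold M N. unfold nrm2, dot, det2; simpl.
  pose proof s3 as S. revert S. generalize (sqrt 3). intros s S.
  repeat split.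
  - replace (s/2*(M-N)*(s/2*(M-N))) with (s*s*((M-N)*(M-N))/4) by field. rewrite S. field.
  - replace (s/2*M*(s/2*M)) with (s*s*(M*M)/4) by field. rewrite S. field.
  - replace (s/2*(M-N)*(s/2*M)) with (s*s*((M-N)*M)/4) by field. rewrite S. field.
  - field.
Qed.

Theorem lemma4p7 (a b c m n : Z) (t : R) :
  primitive_eisenstein_triple a b c ->
  (0 < m)%Z -> (0 < n)%Z -> Z.gcd m n = 1%Z ->
  1 <= IZR m / IZR n <= 2 ->
  ~ (3 | m + n)%Z ->
  (((a, b, c) = (m * (2*n - m), n * (2*m - n), m*m - m*n + n*n)) \/
   ((b - a, b, c) = (m * (2*n - m), n * (2*m - n), m*m - m*n + n*n)))%Z ->
  PI / 3 <= t <= PI / 2 ->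
  cos t = Rabs (IZR (b - 2*a)) / (2 * IZR c) ->
  WR_h (Gamma_mn m n) /\
  (forall G : lattice, C_h t G <-> (WR_h G /\ similar G (Gamma_mn m n))) /\
  lat_min (Gamma_mn m n) = IZR c /\
  lat_det (Gamma_mn m n) = IZR b * (sqrt 3 / 2) /\
  lat_index (Gamma_mn m n) = IZR b.
Proof.
  intros _ Hm Hn _ Hr _ Hcase Ht Hcos.
  assert (Hb : (b = n*(2*m-n))%Z) by (destruct Hcase as [E|E]; injection E; auto).
  assert (Hc : (c = m*m - m*n + n*n)%Z) by (destruct Hcase as [E|E]; injection E; auto).
  assert (HD : (b - 2*a = 2*m*m - 2*m*n - n*n \/ b - 2*a = -(2*m*m - 2*m*n - n*n))%Z).
  { destruct Hcase as [E|E]; pose proof (f_equal (fun p => fst (fst p)) E) as Ea;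
    pose proof (f_equal (fun p => snd (fst p)) E) as Eb; cbn [fst snd] in Ea, Eb; [left|right]; lia. }
  assert (Hnm : IZR n <= IZR m <= 2 * IZR n).
  { assert (0 < IZR n) by (apply IZR_lt; lia).
    assert (IZR m = IZR m / IZR n * IZR n) by (field; lra). nra. }
  assert (HDR : Rabs (IZR (b - 2*a)) = Rabs (2*IZR m*IZR m - 2*IZR m*IZR n - IZR n*IZR n)).
  { destruct HD as [E|E]; rewrite E; rewrite ?Ropp_Ropp_IZR, ?Rabs_Ropp, ?opp_IZR, ?Rabs_Ropp,
      ?minus_IZR, ?mult_IZR; reflexivity. }
  rewrite HDR in Hcos. clear HD HDR Hcase. subst b c.
  assert (EC : IZR (m*m - m*n + n*n) = IZR m*IZR m - IZR m*IZR n + IZR n*IZR n)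
    by (rewrite plus_IZR, minus_IZR, !mult_IZR; ring).
  assert (EB : IZR (n*(2*m - n)) = IZR n*(2*IZR m - IZR n))
    by (rewrite mult_IZR, minus_IZR, mult_IZR; ring).
  rewrite EC in Hcos |- *. rewrite EB. clear EC EB.
  pose proof (g_facts m n) as [n1 [n2 [d12 det12]]]. simpl in n1, n2, d12, det12.
  revert Hcos n1 n2 d12 det12 Hnm. pose proof (Gamma_eq m n) as GE.
  pose proof Hn as Hn'. apply IZR_lt in Hn'.
  assert (SL : forall x, Gamma_mn m n x -> Lambda_h x).
  { intros x Gx. apply GE in Gx. destruct Gx as [p [q ->]].
    exists (p*m + q*(m-n))%Z, (p*(m-n) + q*m)%Z.
    unfold g1, g2, Mh, col1, col2, matmul, vadd, vscal; simpl.
    rewrite !plus_IZR, !mult_IZR. f_equal; ring. }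
  revert SL GE.
  generalize (g1 m n) (g2 m n) (Gamma_mn m n). intros w1 w0 Gam SL GE.
  revert SL GE Ht.
  generalize (IZR m) (IZR n) Hn'. clear. intros M N Hn SL GE Ht Hcos n1 n2 d12 det12 Hnm.
  set (C := M*M - M*N + N*N) in *.
  set (DR := 2*M*M - 2*M*N - N*N) in *.
  assert (Cpos : 0 < C) by (unfold C; nra).
  assert (DRle : Rabs DR <= C) by (unfold Rabs, DR, C; destruct Rcase_abs; nra).
  assert (Wb : exists w2, (forall x, Gam x <-> zspan w1 w2 x) /\ nrm2 w2 = C /\
                     dot w1 w2 = Rabs DR / 2 /\ det2 w1 w2 <> 0).
  { destruct (Rle_dec 0 DR) as [Hp|Hp].
    - exists w0. split; [exact GE|split; [exact n2|split]].
      + rewrite d12. rewrite Rabs_right by lra. auto.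
      + rewrite det12. assert (0 < N*(2*M-N)) by nra.
        assert (0 < sqrt 3) by (apply sqrt_lt_R0; lra). nra.
    - exists (vscal (-1) w0). split; [|split; [|split]].
      + intro x. rewrite GE. split; intros [p [q ->]]; exists p, (-q)%Z;
        destruct w1, w0; unfold vadd, vscal; simpl; rewrite opp_IZR; f_equal; ring.
      + rewrite <- n2. destruct w0; unfold nrm2, dot, vscal; simpl; ring.
      + rewrite Rabs_left by lra. rewrite <- (Ropp_involutive (dot w1 w0)) in d12.
        destruct w1, w0; unfold dot, vscal in *; simpl in *. lra.
      + destruct w1, w0; unfold det2, vscal in *; simpl in *.
        assert (0 < N*(2*M-N)) by nra.
        assert (0 < sqrt 3) by (apply sqrt_lt_R0; lra). nra. }
  destruct Wb as [w2 [GE2 [nw2 [dw2 detw2]]]].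
  assert (Bas : is_basis Gam w1 w2) by (split; auto).
  assert (Bas0 : is_basis Gam w1 w0).
  { split; [|exact GE]. rewrite det12. assert (0 < N*(2*M-N)) by nra.
    assert (0 < sqrt 3) by (apply sqrt_lt_R0; lra). nra. }
  assert (Min : is_min_norm Gam C).
  { apply (min_norm_ext (zspan w1 w2)); [intro; symmetry; auto|].
    apply zspan_min; auto. rewrite dw2. rewrite Rabs_right by (apply Rle_ge, Rmult_le_pos; [apply Rabs_pos|apply Rlt_le, Rinv_0_lt_compat; lra]). lra. }
  assert (LM : lat_min Gam = C) by (apply lat_min_eq; auto).
  assert (LD : lat_det Gam = N*(2*M-N) * (sqrt 3/2)).
  { rewrite (lat_det_basis _ _ _ Bas0), det12. assert (0 < N*(2*M-N)) by nra.
    assert (0 < sqrt 3) by (apply sqrt_lt_R0; lra). rewrite Rabs_right by nra. ring. }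
  assert (LDh : lat_det Lambda_h = sqrt 3/2).
  { assert (0 < sqrt 3) by (apply sqrt_lt_R0; lra).
    rewrite (lat_det_basis _ (col1 Mh) (col2 Mh)).
    - unfold det2, Mh, col1, col2; simpl. rewrite Rabs_right; lra.
    - split; [unfold det2, Mh, col1, col2; simpl; lra | reflexivity]. }
  assert (WRG : WR_h Gam).
  { split; [|exact SL]. split; [exists w1, w2; auto|].
    exists w1, w2. rewrite LM. auto. }
  assert (Sq : forall r, 0 <= r -> sqrt r * sqrt r = r) by (intros; apply sqrt_sqrt; auto).
  split; [exact WRG|]. split; [|split; [exact LM|split; [exact LD|]]].
  2:{ unfold lat_index. rewrite LD, LDh. field. assert (0 < sqrt 3) by (apply sqrt_lt_R0; lra). lra. }
  intro G. split.
  - intros [WG [_ [u1 [u2 [Bu [nu1 [nu2 hc]]]]]]]. split; [exact WG|].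
    set (r := lat_min G) in *.
    assert (rpos : 0 < r).
    { destruct Bu as [du _]. rewrite <- nu1. destruct u1 as [x y], u2.
      unfold nrm2, dot, det2 in *; simpl in *.
      destruct (Rlt_dec 0 (x*x+y*y)) as [h|h]; auto. exfalso.
      assert (x = 0) by nra. assert (y = 0) by nra. subst. apply du; ring. }
    rewrite nu1, nu2, Sq in hc by lra.
    assert (Du : dot u1 u2 = r / C * dot w1 w2).
    { rewrite dw2. assert (dot u1 u2 = cos t * r) by (rewrite hc; field; lra).
      rewrite H, Hcos. field. lra. }
    destruct (sim_exists u1 u2 w1 w2 (r/C)) as [al [A [aln [orth [e1 e2]]]]].
    + apply Rdiv_lt_0_compat; lra.
    + auto.
    + rewrite nu1, n1. fold C. field. lra.
    + rewrite nu2, nw2. field. lra.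
    + exact Du.
    + exists al, A. split; [auto|split; [auto|]].
      apply (sim_of_basis G Gam al A w1 w2); auto.
      * rewrite e1, e2. apply Bu.
  - intros [WG [al [A [aln [orth Hs]]]]]. split; [exact WG|].
    assert (Hs' : forall x, G x <-> exists y, zspan w1 w2 y /\ x = simf al A y).
    { intro x. rewrite Hs. split; intros [y [Hy E]]; exists y; split; auto; apply GE2; auto. }
    pose proof (simf_image _ _ _ _ _ Hs') as GI.
    assert (al2 : 0 < al*al) by nra.
    assert (nu1 : nrm2 (simf al A w1) = al*al*C) by (unfold nrm2; rewrite simf_dot by auto; fold (nrm2 w1); rewrite n1; auto).
    assert (nu2 : nrm2 (simf al A w2) = al*al*C) by (unfold nrm2; rewrite simf_dot by auto; fold (nrm2 w2); rewrite nw2; auto).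
    assert (du : dot (simf al A w1) (simf al A w2) = al*al*(Rabs DR/2)) by (rewrite simf_dot by auto; rewrite dw2; auto).
    assert (MinG : is_min_norm G (al*al*C)).
    { apply (min_norm_ext (zspan (simf al A w1) (simf al A w2))); [intro; symmetry; auto|].
      apply zspan_min; auto; [nra|]. rewrite du.
      rewrite Rabs_right by (apply Rle_ge; apply Rmult_le_pos; [lra|]; apply Rmult_le_pos; [apply Rabs_pos|apply Rlt_le, Rinv_0_lt_compat; lra]).
      nra. }
    assert (LG : lat_min G = al*al*C) by (apply lat_min_eq; auto).
    split; [exact Ht|]. exists (simf al A w1), (simf al A w2).
    split; [split; [apply simf_det; auto | exact GI]|].
    rewrite LG. split; [auto|split; [auto|]].
    rewrite nu1, nu2, Sq by nra. rewrite du, Hcos. field. lra.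
Qed.
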